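(* Let $G$ be a group, let $N$ be a normal subgroup of $G$, and let $S=\bigoplus_{g\in G}S_g$ be an epsilon-strongly $G$-graded ring, with $\epsilon_g$ the multiplicative identity element of $S_gS_{g^{-1}}$. Consider the induced $G/N$-grading $\{S_C\}_{C\in G/N}$ of $S$. Then: (a) For each $C\in G/N$, the set $E_C=\bigvee\{\epsilon_g\mid g\in C\}$ is a set of local units for the ring $S_CS_{C^{-1}}$. In particular, the induced $G/N$-grading is essentially epsilon-strong. (b) If for each $C\in G/N$ (i) the poset $(E_C,\le)$ contains no infinite chain and (ii) the maximal elements of $(E_C,\le)$ are pairwise orthogonal, then the induced $G/N$-grading is virtually epsilon-strong.
   Context: Rings are associative, not necessarily unital; $AB$ denotes finite sums of products. A $G$-grading of $S$: $S=\bigoplus_{g\in G}S_g$, $S_gS_h\subseteq S_{gh}$. Symmetric: $S_gS_{g^{-1}}S_g=S_g$ for all $g$. Epsilon-strong: symmetric and each $S_gS_{g^{-1}}$ is unital (identity $\epsilon_g$; these are central idempotents of $S_e$). Induced $G/N$-grading: $S_C=\bigoplus_{g\in C}S_g$. For a ring $R$, $E(R)$ is its set of idempotents with order $a\le b$ iff $a=ab=ba$, $a\vee b$ the least upper bound (for commuting $a,b$, $a\vee b=a+b-ab$), and $\bigvee F$ the set of finite joins of elements of $F$. A set of local units for $R$ is a $\vee$-closed subset $E\subseteq E(R)$ of pairwise commuting idempotents such that for each $r\in R$ there is $f\in E$ with $fr=rf=r$. $R$ has enough idempotents if there is a set $M$ of pairwise orthogonal, commuting idempotents of $R$ such that $\bigvee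 M$ is a set of local units for $R$. A symmetric grading $\{T_h\}_{h\in H}$ is essentially (resp. virtually) epsilon-strong if every ring $T_hT_{h^{-1}}$ has a set of local units (resp. has enough idempotents). *)

(* Defs.v *)
From HB Require Import structures.
From mathcomp Require Import all_boot all_algebra.
Set Implicit Arguments. Unset Strict Implicit. Unset Printing Implicit Defensive.
Import GRing.Theory.

(* Rings: an additive group [V : zmodType] together with an associative,
   bi-distributive multiplication [m] (no unit required). *)

Section Defs.
Variable V : zmodType.
Variable m : V -> V -> V.

Local Open Scope ring_scope.

Definition nonunital_ring_axioms : Prop :=
  (forall x y z, m x (m y z) = m (m x y) z) /\
  (forall x y z, m x (y + z) = m x y + m x z) /\
  (forall x y z, m (x + y) z = m x z + m y z).

Inductive fsums (P : V -> Prop) : V -> Prop :=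
| fsums0 : fsums P 0
| fsums_in x : P x -> fsums P x
| fsumsD x y : fsums P x -> fsums P y -> fsums P (x + y).

Definition prodset (A B : V -> Prop) : V -> Prop :=
  fsums (fun z => exists a b, A a /\ B b /\ z = m a b).

Definition set_eq (A B : V -> Prop) : Prop := forall x, A x <-> B x.

Definition unit_of (R : V -> Prop) (e : V) : Prop :=
  R e /\ forall x, R x -> m e x = x /\ m x e = x.

Definition idem (R : V -> Prop) (e : V) : Prop := R e /\ m e e = e.
Definition idem_le (a b : V) : Prop := a = m a b /\ a = m b a.

Definition is_join (R : V -> Prop) (a b c : V) : Prop :=
  idem R c /\ idem_le a c /\ idem_le b c /\
  forall d, idem R d -> idem_le a d -> idem_le b d -> idem_le c d.

Inductive joins (R F : V -> Prop) : V -> Prop :=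
| joins_in x : F x -> joins R F x
| joins_join a b c : joins R F a -> joins R F b -> is_join R a b c -> joins R F c.

Definition local_units (R E : V -> Prop) : Prop :=
  (forall e, E e -> idem R e) /\
  (forall a b, E a -> E b -> m a b = m b a) /\
  (forall a b c, E a -> E b -> is_join R a b c -> E c) /\
  (forall r, R r -> exists f, E f /\ m f r = r /\ m r f = r).

Definition has_local_units (R : V -> Prop) : Prop :=
  exists E, local_units R E.

Definition enough_idempotents (R : V -> Prop) : Prop :=
  exists M : V -> Prop,
    (forall e, M e -> idem R e) /\
    (forall a b, M a -> M b -> m a b = m b a) /\
    (forall a b, M a -> M b -> a <> b -> m a b = 0 /\ m b a = 0) /\
    local_units R (joins R M).

Definition no_infinite_chain (E : V -> Prop) : Prop :=
  ~ exists f : nat -> V, injective f /\ (forall n, E (f n)) /\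
      forall i j, idem_le (f i) (f j) \/ idem_le (f j) (f i).

Definition maximal_in (E : V -> Prop) (e : V) : Prop :=
  E e /\ forall f, E f -> idem_le e f -> f = e.

Definition maximals_orthogonal (E : V -> Prop) : Prop :=
  forall a b, maximal_in E a -> maximal_in E b -> a <> b ->
    m a b = 0 /\ m b a = 0.

Section Graded.
Variable G : groupType.
Local Open Scope group_scope.

Definition grading (S : G -> V -> Prop) : Prop :=
  (forall g, S g 0%R /\ (forall x y, S g x -> S g y -> S g (x + y)%R) /\
             (forall x, S g x -> S g (- x)%R)) /\
  (forall g h x y, S g x -> S h y -> S (g * h) (m x y)) /\
  (forall x, fsums (fun y => exists g, S g y) x) /\
  (forall l : seq (G * V), uniq (map fst l) ->
     (forall p, p \in l -> S p.1 p.2) ->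
     (\sum_(p <- l) p.2)%R = 0%R -> forall p, p \in l -> p.2 = 0%R).

Definition symmetric_grading (S : G -> V -> Prop) : Prop :=
  forall g, set_eq (prodset (prodset (S g) (S g^-1)) (S g)) (S g).

Definition epsilon_strong (S : G -> V -> Prop) : Prop :=
  symmetric_grading S /\
  forall g, exists e, unit_of (prodset (S g) (S g^-1)) e.

Definition normal_subgroup (N : G -> Prop) : Prop :=
  N 1 /\ (forall x y, N x -> N y -> N (x * y)) /\ (forall x, N x -> N x^-1) /\
  (forall x g, N x -> N (g^-1 * x * g)).

Definition is_coset (N C : G -> Prop) : Prop :=
  exists g, forall x, C x <-> N (g^-1 * x).

Definition coset_inv (C : G -> Prop) : G -> Prop := fun x => C x^-1.

Definition SC (S : G -> V -> Prop) (C : G -> Prop) : V -> Prop :=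
  fsums (fun y => exists g, C g /\ S g y).

Definition RC (S : G -> V -> Prop) (C : G -> Prop) : V -> Prop :=
  prodset (SC S C) (SC S (coset_inv C)).

Definition EC (S : G -> V -> Prop) (eps : G -> V) (C : G -> Prop) : V -> Prop :=
  joins (RC S C) (fun e => exists g, C g /\ e = eps g).

Definition induced_symmetric (N : G -> Prop) (S : G -> V -> Prop) : Prop :=
  forall C, is_coset N C ->
    set_eq (prodset (RC S C) (SC S C)) (SC S C).

Definition induced_essentially_eps_strong (N : G -> Prop) (S : G -> V -> Prop) : Prop :=
  induced_symmetric N S /\ forall C, is_coset N C -> has_local_units (RC S C).

Definition induced_virtually_eps_strong (N : G -> Prop) (S : G -> V -> Prop) : Prop :=
  induced_symmetric N S /\ forall C, is_coset N C -> enough_idempotents (RC S C).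

End Graded.
End Defs.

(* Main.v *)
Require Import Defs.
From HB Require Import structures.
From mathcomp Require Import all_boot all_algebra.
From Stdlib Require Import Classical IndefiniteDescription.
Set Implicit Arguments. Unset Strict Implicit. Unset Printing Implicit Defensive.
Import GRing.Theory.

Section Ring.
Variables (V : zmodType) (m : V -> V -> V) (Hm : nonunital_ring_axioms m).
Local Open Scope ring_scope.

Lemma mA x y z : m x (m y z) = m (m x y) z. Proof. by case: Hm. Qed.
Lemma mDr x y z : m x (y + z) = m x y + m x z. Proof. by case: Hm => _ []. Qed.
Lemma mDl x y z : m (x + y) z = m x z + m y z. Proof. by case: Hm => _ []. Qed.
Lemma m0r x : m x 0 = 0.
Proof. by apply: (addrI (m x 0)); rewrite -mDr !addr0. Qed.
Lemma m0l x : m 0 x = 0.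
Proof. by apply: (addrI (m 0 x)); rewrite -mDl !addr0. Qed.
Lemma mNr x y : m x (- y) = - m x y.
Proof. by apply/eqP; rewrite -addr_eq0 -mDr addNr m0r. Qed.
Lemma mNl x y : m (- x) y = - m x y.
Proof. by apply/eqP; rewrite -addr_eq0 -mDl addNr m0l. Qed.
Lemma mBr x y z : m x (y - z) = m x y - m x z. Proof. by rewrite mDr mNr. Qed.
Lemma mBl x y z : m (x - y) z = m x z - m y z. Proof. by rewrite mDl mNl. Qed.

Lemma fsums_closed (P T : V -> Prop) : T 0 -> (forall x y, T x -> T y -> T (x + y)) ->
  (forall x, P x -> T x) -> forall x, fsums P x -> T x.
Proof. by move=> T0 TD TP x; elim => //; auto. Qed.

Lemma fsums_mono (P Q : V -> Prop) : (forall x, P x -> Q x) -> forall x, fsums P x -> fsums Q x.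
Proof. move=> PQ; apply: fsums_closed; [exact: fsums0 | exact: fsumsD | by move=> x /PQ; apply: fsums_in]. Qed.

Lemma fsumsN (P : V -> Prop) : (forall x, P x -> P (- x)) -> forall x, fsums P x -> fsums P (- x).
Proof.
move=> PN x; elim.
- by rewrite oppr0; apply: fsums0.
- by move=> y /PN; apply: fsums_in.
- by move=> y z _ Hy _ Hz; rewrite opprD; apply: fsumsD.
Qed.

Lemma prod_fsums (P Q T : V -> Prop) : T 0 -> (forall x y, T x -> T y -> T (x + y)) ->
  (forall a b, P a -> Q b -> T (m a b)) ->
  forall x y, fsums P x -> fsums Q y -> T (m x y).
Proof.
move=> T0 TD TPQ x y Hx; elim: Hx y.
- by move=> y _; rewrite m0l.
- move=> a Pa y; elim.
  + by rewrite m0r.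
  + by move=> b Qb; apply: TPQ.
  + by move=> u v _ Hu _ Hv; rewrite mDr; apply: TD.
- by move=> u v _ Hu _ Hv y Hy; rewrite mDl; apply: TD; auto.
Qed.

Lemma prodset_sub (A B T : V -> Prop) : T 0 -> (forall x y, T x -> T y -> T (x + y)) ->
  (forall a b, A a -> B b -> T (m a b)) -> forall x, prodset m A B x -> T x.
Proof.
move=> T0 TD TAB; apply: fsums_closed => // z [a [b [Aa [Bb ->]]]]; exact: TAB.
Qed.

Lemma prodset_in (A B : V -> Prop) a b : A a -> B b -> prodset m A B (m a b).
Proof. by move=> Aa Bb; apply: fsums_in; exists a, b. Qed.

Lemma prodset_mono (A B A' B' : V -> Prop) : (forall x, A x -> A' x) -> (forall x, B x -> B' x) ->
  forall x, prodset m A B x -> prodset m A' B' x.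
Proof.
move=> HA HB; apply: fsums_mono => z [a [b [Aa [Bb ->]]]]; exists a, b; auto.
Qed.

Lemma prodsetN (A B : V -> Prop) : (forall x, A x -> A (- x)) ->
  forall x, prodset m A B x -> prodset m A B (- x).
Proof.
move=> AN; apply: fsumsN => z [a [b [Aa [Bb ->]]]]; exists (- a), b; rewrite mNl; auto.
Qed.

Lemma prodsetD (A B : V -> Prop) x y : prodset m A B x -> prodset m A B y -> prodset m A B (x + y).
Proof. exact: fsumsD. Qed.

Lemma le_trans a b c : idem_le m a b -> idem_le m b c -> idem_le m a c.
Proof.
move=> [h1 h2] [h3 h4]; split.
- by rewrite {1}h1 {1}h3 mA -h1.
- by rewrite {1}h2 {1}h4 -mA -h2.
Qed.

Lemma le_antisym a b : idem_le m a b -> idem_le m b a -> a = b.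
Proof. by move=> [h1 _] [_ h2]; rewrite h1 -h2. Qed.

Lemma join_formula (R : V -> Prop) a b : idem m R a -> idem m R b -> m a b = m b a ->
  R (a + b - m a b) -> is_join m R a b (a + b - m a b).
Proof.
move=> [Ra aa] [Rb bb] ab Rc.
have aba : m (m a b) a = m a b by rewrite -mA -ab mA aa.
have ca : m (a + b - m a b) a = a.
  by rewrite mBl !mDl aa aba -ab addrK.
have cb : m (a + b - m a b) b = b.
  by rewrite mBl !mDl bb -mA bb (addrC (m a b)) addrK.
have cab : m (a + b - m a b) (m a b) = m a b by rewrite mA ca.
split; [split=> //|split; [|split]].
- by rewrite mBr !mDr ca cb cab.
- by split; [rewrite mBr !mDr aa mA aa addrK | rewrite ca].
- by split; [rewrite mBr !mDr bb ab mA bb (addrC (m b a)) addrK | rewrite cb].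
- move=> d [Rd dd] [ad da] [bd db]; split.
  + by rewrite mBl !mDl -ad -bd -mA -bd.
  + by rewrite mBr !mDr -da -db mA -da.
Qed.

Lemma join_unique (R : V -> Prop) a b c : idem m R a -> idem m R b -> m a b = m b a ->
  R (a + b - m a b) -> is_join m R a b c -> c = a + b - m a b.
Proof.
move=> Ia Ib ab Rc [Ic [ac [bc Hc]]].
have [Id [ad [bd Hd]]] := join_formula Ia Ib ab Rc.
apply: le_antisym; first exact: Hc.
exact: Hd.
Qed.


Lemma idem_le_refl R a : idem m R a -> idem_le m a a.
Proof. by move=> [_ aa]; split. Qed.

Lemma le_unit_l f c x : idem_le m f c -> m f x = x -> m c x = x.
Proof. by move=> [_ h] hx; rewrite -hx mA -h. Qed.

Lemma le_unit_r f c x : idem_le m f c -> m x f = x -> m x c = x.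
Proof. by move=> [h _] hx; rewrite -hx -mA -h. Qed.

Section Graded.
Variables (G : groupType) (S : G -> V -> Prop) (HS : grading m S)
  (Hsym : symmetric_grading m S) (eps : G -> V)
  (Heps : forall g : G, unit_of m (prodset m (S g) (S (g^-1)%g)) (eps g)).

Lemma S0 g : S g 0. Proof. by case: HS => /(_ g) []. Qed.
Lemma SD g x y : S g x -> S g y -> S g (x + y). Proof. by case: HS => /(_ g) [_ [H _]] _; apply: H. Qed.
Lemma SN g x : S g x -> S g (- x). Proof. by case: HS => /(_ g) [_ [_ H]] _; apply: H. Qed.
Lemma SM g h x y : S g x -> S h y -> S (g * h)%g (m x y). Proof. by case: HS => _ []; auto. Qed.

Lemma Rg_S1 g x : prodset m (S g) (S (g^-1)%g) x -> S 1%g x.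
Proof.
apply: prodset_sub; [exact: S0 | exact: SD |] => a b Ha Hb.
by rewrite -(mulgV g); apply: SM.
Qed.

Lemma eps_S1 g : S 1%g (eps g).
Proof. by apply: (Rg_S1 (g := g)); case: (Heps g). Qed.

Lemma E1 g s : S g s -> m (eps g) s = s.
Proof.
move=> Hs; have := (Hsym g s).2 Hs.
apply: (prodset_sub (T := fun x => m (eps g) x = x)); [exact: m0r | by move=> x y hx hy; rewrite mDr hx hy |].
by move=> a b Ha Hb; rewrite mA ((Heps g).2 a Ha).1.
Qed.

Lemma E2 g s : S g s -> m s (eps (g^-1)%g) = s.
Proof.
move=> Hs; have := (Hsym g s).2 Hs.
apply: (prodset_sub (T := fun x => m x (eps (g^-1)%g) = x)); [exact: m0l | by move=> x y hx hy; rewrite mDl hx hy |].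
move=> a b Ha Hb; move: a Ha.
apply: (prodset_sub (T := fun a => m (m a b) (eps (g^-1)%g) = m a b)); [by rewrite !m0l | by move=> x y hx hy; rewrite !mDl hx hy |].
move=> u v Hu Hv.
have Hvb : prodset m (S (g^-1)%g) (S (g^-1)^-1)%g (m v b).
  by apply: prodset_in => //; rewrite invgK.
by rewrite -!mA (mA v) ((Heps (g^-1)%g).2 _ Hvb).2.
Qed.

Lemma E3 g s : S 1%g s -> m (eps g) s = m s (eps g).
Proof.
move=> Hs.
have h1 : prodset m (S g) (S (g^-1)%g) (m s (eps g)).
  have := (Heps g).1; apply: (prodset_sub (T := fun x => prodset m (S g) (S (g^-1)%g) (m s x))).
  - by rewrite m0r; apply: fsums0.
  - by move=> x y hx hy; rewrite mDr; apply: fsumsD.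
  - move=> a b Ha Hb; rewrite mA; apply: prodset_in => //.
    by rewrite -(mul1g g); apply: SM.
have h2 : prodset m (S g) (S (g^-1)%g) (m (eps g) s).
  have := (Heps g).1; apply: (prodset_sub (T := fun x => prodset m (S g) (S (g^-1)%g) (m x s))).
  - by rewrite m0l; apply: fsums0.
  - by move=> x y hx hy; rewrite mDl; apply: fsumsD.
  - move=> a b Ha Hb; rewrite -mA; apply: prodset_in => //.
    by rewrite -(mulg1 (g^-1)%g); apply: SM.
rewrite -{1}((Heps g).2 _ h2).2 -mA.
exact: ((Heps g).2 _ h1).1.
Qed.

Lemma eps_comm g h : m (eps g) (eps h) = m (eps h) (eps g).
Proof. exact/E3/eps_S1. Qed.

Lemma tri_gen (C1 C2 C3 C4 : G -> Prop) :
  (forall g k h, C1 g -> C2 k -> C3 h -> C4 (g * k * h)%g) ->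
  forall a b c, SC S C1 a -> SC S C2 b -> SC S C3 c -> SC S C4 (m (m a b) c).
Proof.
move=> HC a b c Ha Hb.
pose T z := forall d, SC S C3 d -> SC S C4 (m z d).
suff : T (m a b) by apply.
move: a b Ha Hb; apply: prod_fsums.
- by move=> d _; rewrite m0l; apply: fsums0.
- by move=> x y hx hy d hd; rewrite mDl; apply: fsumsD; [exact: hx | exact: hy].
move=> s t [g [Cg Sgs]] [k [Ck Skt]]; rewrite /T.
apply: (fsums_closed (T := fun d => SC S C4 (m (m s t) d))).
- by rewrite m0r; apply: fsums0.
- by move=> x y hx hy; rewrite mDr; apply: fsumsD.
move=> u [h [Ch Shu]]; apply: fsums_in; exists (g * k * h)%g; split; first by auto.
by apply: SM => //; apply: SM.
Qed.

Section Coset.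
Variables (N : G -> Prop) (HN : normal_subgroup N) (C : G -> Prop) (HC : is_coset N C).

Lemma G1 g k h : C g -> C (k^-1)%g -> C h -> C (g * k * h)%g.
Proof.
case: HC => x Hx; case: HN => N1 [NM [NV _]].
move=> /Hx Ng /Hx Nk /Hx Nh; apply/Hx.
have := NV _ Nk; rewrite invgM !invgK => Nk'.
have := NM _ _ (NM _ _ Ng Nk') Nh.
by rewrite !mulgA mulgK.
Qed.

Lemma G2 b c d : coset_inv C b -> C c -> coset_inv C d -> coset_inv C (b * c * d)%g.
Proof.
rewrite /coset_inv => Hb Hc Hd.
rewrite !invgM mulgA; apply: G1 => //; by rewrite invgK.
Qed.

Lemma C_ne : exists x, C x.
Proof.
case: HC => x Hx; case: HN => N1 _; exists x; apply/Hx; by rewrite mulVg.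
Qed.

Notation Rc := (RC m S C).
Notation Ec := (EC m S eps C).
Notation ci := (coset_inv C).

Lemma SC_S (D : G -> Prop) g x : D g -> S g x -> SC S D x.
Proof. by move=> Dg Sx; apply: fsums_in; exists g. Qed.

Lemma SC_N (D : G -> Prop) x : SC S D x -> SC S D (- x).
Proof. by apply: fsumsN => y [g [Dg Sy]]; exists g; split => //; apply: SN. Qed.

Lemma RC0 : Rc 0. Proof. exact: fsums0. Qed.
Lemma RCD x y : Rc x -> Rc y -> Rc (x + y). Proof. exact: fsumsD. Qed.
Lemma RCN x : Rc x -> Rc (- x). Proof. by apply: prodsetN; apply: SC_N. Qed.

Lemma RCM x y : Rc x -> Rc y -> Rc (m x y).
Proof.
move=> Hx Hy; move: x Hx.
apply: (prodset_sub (T := fun x => Rc (m x y))).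
- by rewrite m0l; apply: RC0.
- by move=> u v hu hv; rewrite mDl; apply: RCD.
move=> a b Ha Hb; move: y Hy.
apply: (prodset_sub (T := fun y => Rc (m (m a b) y))).
- by rewrite m0r; apply: RC0.
- by move=> u v hu hv; rewrite mDr; apply: RCD.
move=> c d Hc Hd; rewrite -mA (mA b); apply: prodset_in => //.
by apply: (tri_gen (C1 := ci) (C2 := C) (C3 := ci) (C4 := ci)) => // ? ? ? ? ? ?; apply: G2.
Qed.

Lemma eps_RC g : C g -> Rc (eps g).
Proof.
move=> Cg; have := (Heps g).1; apply: prodset_mono => x Hx.
  exact: SC_S Hx.
by apply: SC_S Hx; rewrite /coset_inv invgK.
Qed.

Lemma ind_sym : set_eq (prodset m Rc (SC S C)) (SC S C).
Proof.
move=> x; split.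
- apply: (prodset_sub (T := SC S C)); [exact: fsums0 | exact: fsumsD |].
  move=> r s Hr Hs; move: r Hr.
  apply: (prodset_sub (T := fun r => SC S C (m r s))).
  + by rewrite m0l; apply: fsums0.
  + by move=> u v hu hv; rewrite mDl; apply: fsumsD.
  move=> a b Ha Hb.
  by apply: (tri_gen (C1 := C) (C2 := ci) (C3 := C) (C4 := C)) => // ? ? ? ? ? ?; apply: G1.
- apply: (fsums_closed (T := prodset m Rc (SC S C))); [exact: fsums0 | exact: fsumsD |].
  move=> s [g [Cg Sgs]]; rewrite -(E1 Sgs); apply: prodset_in.
    exact: eps_RC.
  exact: SC_S Sgs.
Qed.

Definition Qc x := forall y, (forall h, C h -> m y (eps h) = m (eps h) y) -> m x y = m y x.

Lemma EC_props e : Ec e -> idem m Rc e /\ Qc e.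
Proof.
elim.
- move=> x [g [Cg ->]]; split; first by split; [exact: eps_RC | exact: ((Heps g).2 _ (Heps g).1).1].
  move=> y Hy; by rewrite Hy.
- move=> a b c _ [Ia Qa] _ [Ib Qb] Hj; split; first by case: Hj.
  have bh : forall h, C h -> m b (eps h) = m (eps h) b.
    by move=> h Ch; apply: Qb => h' _; apply: eps_comm.
  have ab : m a b = m b a by apply: Qa.
  have Rj : Rc (a + b - m a b).
    by apply: RCD; [apply: RCD; [case: Ia | case: Ib] | apply: RCN; apply: RCM; [case: Ia | case: Ib]].
  rewrite (join_unique Ia Ib ab Rj Hj) => y Hy.
  have ay := Qa y Hy; have yb := Qb y Hy.
  by rewrite mBl mBr !mDl !mDr ay yb -mA yb mA ay mA.
Qed.

Lemma EC_comm a b : Ec a -> Ec b -> m a b = m b a.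
Proof.
move=> /EC_props [_ Qa] /EC_props [_ Qb]; apply: Qa => h _.
by apply: Qb => h' _; apply: eps_comm.
Qed.

Lemma EC_ub a b : Ec a -> Ec b -> exists c, Ec c /\ idem_le m a c /\ idem_le m b c.
Proof.
move=> Ea Eb; have [Ia _] := EC_props Ea; have [Ib _] := EC_props Eb.
have ab := EC_comm Ea Eb.
have Rj : Rc (a + b - m a b).
  by apply: RCD; [apply: RCD; [case: Ia | case: Ib] | apply: RCN; apply: RCM; [case: Ia | case: Ib]].
have Hj := join_formula Ia Ib ab Rj.
exists (a + b - m a b); split; first exact: (joins_join Ea Eb Hj).
by case: Hj => _ [? [? _]].
Qed.

Lemma unit_l a : SC S C a -> exists f, Ec f /\ m f a = a.
Proof.
apply: (fsums_closed (T := fun a => exists f, Ec f /\ m f a = a)).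
- have [x Cx] := C_ne; exists (eps x); split; last exact: m0r.
  by apply: joins_in; exists x.
- move=> x y [f1 [E1' h1]] [f2 [E2' h2]].
  have [c [Ec' [l1 l2]]] := EC_ub E1' E2'.
  exists c; split => //; rewrite mDr (le_unit_l l1 h1) (le_unit_l l2 h2) //.
move=> s [g [Cg Ss]]; exists (eps g); split; last exact: E1.
by apply: joins_in; exists g.
Qed.

Lemma unit_r b : SC S ci b -> exists f, Ec f /\ m b f = b.
Proof.
apply: (fsums_closed (T := fun b => exists f, Ec f /\ m b f = b)).
- have [x Cx] := C_ne; exists (eps x); split; last exact: m0l.
  by apply: joins_in; exists x.
- move=> x y [f1 [E1' h1]] [f2 [E2' h2]].
  have [c [Ec' [l1 l2]]] := EC_ub E1' E2'.
  exists c; split => //; rewrite mDl (le_unit_r l1 h1) (le_unit_r l2 h2) //.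
move=> s [g [Cg Ss]]; exists (eps (g^-1)%g); split; last exact: E2.
by apply: joins_in; exists (g^-1)%g.
Qed.

Lemma unit_RC r : Rc r -> exists f, Ec f /\ m f r = r /\ m r f = r.
Proof.
apply: (fsums_closed (T := fun r => exists f, Ec f /\ m f r = r /\ m r f = r)).
- have [x Cx] := C_ne; exists (eps x); split; last by rewrite m0l m0r.
  by apply: joins_in; exists x.
- move=> x y [f1 [E1' [h1 h1']]] [f2 [E2' [h2 h2']]].
  have [c [Ec' [l1 l2]]] := EC_ub E1' E2'.
  exists c; split => //; rewrite mDr mDl (le_unit_l l1 h1) (le_unit_l l2 h2).
  by rewrite (le_unit_r l1 h1') (le_unit_r l2 h2').
move=> z [a [b [Ha [Hb ->]]]].
have [f1 [E1' h1]] := unit_l Ha; have [f2 [E2' h2]] := unit_r Hb.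
have [c [Ec' [l1 l2]]] := EC_ub E1' E2'.
exists c; split => //; split.
- by rewrite mA (le_unit_l l1 h1).
- by rewrite -mA (le_unit_r l2 h2).
Qed.

Lemma EC_local : local_units m Rc Ec.
Proof.
split; first by move=> e /EC_props [].
split; first exact: EC_comm.
split; first by move=> a b c Ea Eb Hj; apply: joins_join Hj.
exact: unit_RC.
Qed.

Lemma EC_virt : no_infinite_chain m Ec -> enough_idempotents m Rc.
Proof.
move=> Hnc.
have [e Me] : exists e, maximal_in m Ec e.
  apply: NNPP => Hno.
  have step : forall e, exists f, Ec e -> Ec f /\ idem_le m e f /\ f <> e.
    move=> e; case: (classic (Ec e)) => He; last by exists e.
    apply: NNPP => H1; apply: Hno; exists e; split => // f Ef lef.
    by apply: NNPP => nfe; apply: H1; exists f => _.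
  pose nx e := proj1_sig (constructive_indefinite_description _ (step e)).
  have Hnx e : Ec e -> Ec (nx e) /\ idem_le m e (nx e) /\ nx e <> e.
    exact: (proj2_sig (constructive_indefinite_description _ (step e))).
  have [x Cx] := C_ne.
  pose f n := iter n nx (eps x).
  have Ef : forall n, Ec (f n).
    by elim => [|n IH]; [apply: joins_in; exists x | exact: (Hnx _ IH).1].
  have fS n : f n.+1 = nx (f n) by [].
  have Hle : forall i k, idem_le m (f i) (f (i + k)%N).
    move=> i; elim => [|k IH].
      by rewrite addn0; apply: (idem_le_refl (R := Rc)); case: (EC_props (Ef i)).
    rewrite addnS fS; apply: le_trans IH _; exact: (Hnx _ (Ef _)).2.1.
  have key : forall i k, f i <> f (i + k.+1)%N.
    move=> i k E.
    have l2 : idem_le m (f (i + k)%N.+1) (f (i + k)%N) by rewrite -addnS -E; exact: Hle.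
    have := le_antisym (Hnx _ (Ef (i + k)%N)).2.1 l2.
    by move=> HH; apply: (Hnx _ (Ef (i + k)%N)).2.2; rewrite -HH.
  apply: Hnc; exists f; split; [|split => //].
  - move=> i j E; case: (ltngtP i j) => // h.
    + by have := key i (j - i.+1)%N; rewrite addnS -addSn subnKC // -E.
    + by have := key j (i - j.+1)%N; rewrite addnS -addSn subnKC // E.
  - move=> i j; case: (leqP i j) => h; [left | right].
    + by rewrite -(subnKC h); apply: Hle.
    + by rewrite -(subnKC (ltnW h)); apply: Hle.
have Mx : forall f, Ec f -> idem_le m f e.
  move=> f Ef; have [c [Ec' [l1 l2]]] := EC_ub Me.1 Ef.
  by have ce := Me.2 c Ec' l1; rewrite -ce.
have sub : forall x, joins m Rc (fun x => x = e) x -> Ec x.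
  move=> x; elim; first by move=> y ->; exact: Me.1.
  by move=> a b c _ Ea _ Eb Hj; apply: joins_join Ea Eb Hj.
exists (fun x => x = e); split; first by move=> a ->; exact: (EC_props Me.1).1.
split; first by move=> a b -> ->.
split; first by move=> a b -> ->.
split; first by move=> a /sub /EC_props [].
split; first by move=> a b /sub Ea /sub Eb; apply: EC_comm.
split; first by move=> a b c Ea Eb Hj; apply: joins_join Hj.
move=> r /unit_RC [f [Ef [h1 h2]]]; exists e; split; first exact: joins_in.
by split; [apply: le_unit_l (Mx _ Ef) h1 | apply: le_unit_r (Mx _ Ef) h2].
Qed.

End Coset.
End Graded.
End Ring.

Theorem theorem5p15 (G : groupType) (N : G -> Prop) (HN : normal_subgroup N)
  (V : zmodType) (m : V -> V -> V) (Hm : nonunital_ring_axioms m)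
  (S : G -> V -> Prop) (HS : grading m S) (Heps_strong : epsilon_strong m S)
  (eps : G -> V)
  (Heps : forall g : G, unit_of m (prodset m (S g) (S (g^-1)%g)) (eps g)) :
  (forall C : G -> Prop, is_coset N C -> local_units m (RC m S C) (EC m S eps C)) /\
  induced_essentially_eps_strong m N S /\
  ((forall C : G -> Prop, is_coset N C ->
       no_infinite_chain m (EC m S eps C) /\ maximals_orthogonal m (EC m S eps C)) ->
   induced_virtually_eps_strong m N S).
Proof.
have [Hsym _] := Heps_strong.
have isym : induced_symmetric m N S.
  by move=> C HC; exact: (ind_sym Hm HS Hsym Heps HN HC).
split; first by move=> C HC; exact: (EC_local Hm HS Hsym Heps HN HC).
split; first by split => // C HC; exists (EC m S eps C); exact: (EC_local Hm HS Hsym Heps HN HC).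
move=> H; split => // C HC; apply: (EC_virt Hm HS Hsym Heps HN HC).
by case: (H C HC).
Qed.
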